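(* Let $a,\lambda\in\mathbb{R}^n$ with $\|a\|=\|\lambda\|=1$ and $\lambda\neq\pm a$, and let $d\in\mathbb{R}^m$ with $\|d\|\le1$. Fix $y\in\mathbb{R}^m$. The Lagrangian dual of $$(P)\qquad \max_x\{\lambda^\mathsf{T} x:\|x\|\le\|y\|,\ a^\mathsf{T} x+d^\mathsf{T} y\le0\}$$ is $$(D)\qquad \inf_\theta\{\|\lambda-\theta a\|\,\|y\|-\theta\,d^\mathsf{T} y:\theta\ge0\}.$$ An optimal solution of $(P)$ is $x(y)=\lambda\|y\|$ if $\lambda^\mathsf{T} a\|y\|+d^\mathsf{T} y\le0$, and otherwise $$x(y)=\sqrt{\tfrac{\|y\|^2-(d^\mathsf{T} y)^2}{1-(\lambda^\mathsf{T} a)^2}}\,\lambda-\Big(d^\mathsf{T} y+\lambda^\mathsf{T} a\sqrt{\tfrac{\|y\|^2-(d^\mathsf{T} y)^2}{1-(\lambda^\mathsf{T} a)^2}}\Big)a.$$ An optimal dual solution (with values in $\mathbb{R}_+\cup\{+\infty\}$) is $\theta(y)=0$ if $\lambda^\mathsf{T} a\|y\|+d^\mathsf{T} y\le0$, and otherwise $$\theta(y)=\lambda^\mathsf{T} a+d^\mathsf{T} y\,\frac{\sqrt{1-(\lambda^\mathsf{T} a)^2}}{\sqrt{\|y\|^2-(d^\mathsf{T} y)^2}},$$ with the conventions $1/0=+\infty$ and $r+(+\infty)=+\infty$ (a dual value at $\theta=+\infty$ meaning the limit as $\theta\to+\infty$). Strong duality holds, i.e. the optimal values of $(P)$ and $(D)$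 coincide, and the optimal value of $(P)$ equals $\|y\|$ if $\lambda^\mathsf{T} a\|y\|+d^\mathsf{T} y\le0$ and $\sqrt{(\|y\|^2-(d^\mathsf{T} y)^2)(1-(\lambda^\mathsf{T} a)^2)}-d^\mathsf{T} y\,\lambda^\mathsf{T} a$ otherwise. Finally, this formula for the optimal value of $(P)$ also holds when $\lambda=\pm a$.
   Context: $\|\cdot\|$ is the Euclidean norm. *)

(* Defs.v *)
From HB Require Import structures.
From mathcomp Require Import all_boot all_order all_algebra.
From mathcomp Require Import all_classical all_reals all_analysis.
Set Implicit Arguments. Unset Strict Implicit. Unset Printing Implicit Defensive.
Import Order.TTheory GRing.Theory Num.Theory.
Import numFieldNormedType.Exports.
Local Open Scope classical_set_scope.
Local Open Scope ring_scope.

Section Defs.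
Variable R : realType.

Definition dotv (k : nat) (u v : 'cV[R]_k) : R := (u^T *m v) 0 0.

(* Euclidean norm ||u|| (the library norm on matrices is the max-norm) *)
Definition enorm (k : nat) (u : 'cV[R]_k) : R := Num.sqrt (dotv u u).

Variables (n m : nat) (a lam : 'cV[R]_n) (d y : 'cV[R]_m).

Definition feasP : set 'cV[R]_n :=
  [set x | enorm x <= enorm y /\ dotv a x + dotv d y <= 0].

Definition optvalP : \bar R := ereal_sup [set (dotv lam x)%:E | x in feasP].

Definition lagrangian (theta : R) (x : 'cV[R]_n) : R :=
  dotv lam x - theta * (dotv a x + dotv d y).

Definition dualfun (theta : R) : \bar R :=
  ereal_sup [set (lagrangian theta x)%:E | x in [set x | enorm x <= enorm y]].

Definition objD (theta : R) : R :=
  enorm (lam - theta *: a) * enorm y - theta * dotv d y.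

Definition optvalD : \bar R := ereal_inf [set (objD theta)%:E | theta in [set t | 0 <= t]].

Definition caseP : Prop := dotv lam a * enorm y + dotv d y <= 0.

Definition sP : R :=
  Num.sqrt ((enorm y ^+ 2 - dotv d y ^+ 2) / (1 - dotv lam a ^+ 2)).

Definition xopt : 'cV[R]_n :=
  if `[< caseP >] then enorm y *: lam
  else sP *: lam - (dotv d y + dotv lam a * sP) *: a.

(* theta(y) with the conventions 1/0 = +oo and r + (+oo) = +oo:
   the division by sqrt(||y||^2-(d^T y)^2) = 0 gives +oo. *)
Definition thetaopt : \bar R :=
  if `[< caseP >] then 0%E
  else if Num.sqrt (enorm y ^+ 2 - dotv d y ^+ 2) == 0 then +oo%E
  else (dotv lam a + dotv d y * (Num.sqrt (1 - dotv lam a ^+ 2)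
         / Num.sqrt (enorm y ^+ 2 - dotv d y ^+ 2)))%:E.

Definition valformula : R :=
  if `[< caseP >] then enorm y
  else Num.sqrt ((enorm y ^+ 2 - dotv d y ^+ 2) * (1 - dotv lam a ^+ 2))
       - dotv d y * dotv lam a.

End Defs.

(* Main.v *)
Require Import Defs.
From HB Require Import structures.
From mathcomp Require Import all_boot all_order all_algebra.
From mathcomp Require Import all_classical all_reals all_analysis.
Import Order.TTheory GRing.Theory Num.Theory.
Import numFieldNormedType.Exports.
Local Open Scope classical_set_scope.
Local Open Scope ring_scope.
From mathcomp Require Import ring lra.
Set Implicit Arguments. Unset Strict Implicit.
Section Basic.
Variable R : realType.
Variable k : nat.
Implicit Types u v w : 'cV[R]_k.

Lemma dotvE u v : dotv u v = \sum_i u i 0 * v i 0.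
Proof. by rewrite /dotv !mxE; apply: eq_bigr => i _; rewrite mxE. Qed.

Lemma dotvC u v : dotv u v = dotv v u.
Proof. by rewrite !dotvE; apply: eq_bigr => i _; rewrite mulrC. Qed.

Lemma dotvDl u v w : dotv (u + v) w = dotv u w + dotv v w.
Proof. rewrite !dotvE -big_split; apply: eq_bigr => i _; by rewrite mxE mulrDl. Qed.

Lemma dotvZl (r : R) u w : dotv (r *: u) w = r * dotv u w.
Proof. rewrite !dotvE mulr_sumr; apply: eq_bigr => i _; by rewrite mxE mulrA. Qed.

Lemma dotvNl u w : dotv (- u) w = - dotv u w.
Proof. by rewrite -scaleN1r dotvZl mulN1r. Qed.

Lemma dotvBl u v w : dotv (u - v) w = dotv u w - dotv v w.
Proof. by rewrite dotvDl dotvNl. Qed.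

Lemma dotvDr u v w : dotv w (u + v) = dotv w u + dotv w v.
Proof. by rewrite !(dotvC w) dotvDl. Qed.
Lemma dotvZr (r : R) u w : dotv w (r *: u) = r * dotv w u.
Proof. by rewrite !(dotvC w) dotvZl. Qed.
Lemma dotvNr u w : dotv w (- u) = - dotv w u.
Proof. by rewrite !(dotvC w) dotvNl. Qed.
Lemma dotvBr u v w : dotv w (u - v) = dotv w u - dotv w v.
Proof. by rewrite !(dotvC w) dotvBl. Qed.

Lemma dotv_ge0 u : 0 <= dotv u u.
Proof. rewrite dotvE; apply: sumr_ge0 => i _; rewrite -expr2; exact: sqr_ge0. Qed.

Lemma enorm_ge0 u : 0 <= enorm u.
Proof. exact: sqrtr_ge0. Qed.

Lemma enorm_sq u : enorm u ^+ 2 = dotv u u.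
Proof. by rewrite /enorm sqr_sqrtr // dotv_ge0. Qed.

Lemma enormZ (r : R) u : enorm (r *: u) = `|r| * enorm u.
Proof.
by rewrite /enorm dotvZl dotvZr mulrA -expr2 sqrtrM ?sqr_ge0 // sqrtr_sqr.
Qed.

Lemma dotv0 u : dotv u u = 0 -> forall v, dotv u v = 0.
Proof.
move=> h v.
have H := dotv_ge0 (u - (dotv u v / (dotv v v + 1)) *: v).
rewrite dotvBl !dotvBr !dotvZl !dotvZr h (dotvC v u) in H.
move: H; set p := dotv u v; set q := dotv v v => H.
set r := p / (q + 1) in H.
have hv : 0 <= q := dotv_ge0 v.
have hq : q + 1 != 0 by rewrite gt_eqF //; lra.
have hr : p = r * (q + 1) by rewrite /r mulfVK.
rewrite hr in H *.
have : r ^+ 2 * (q + 2) <= 0 by nra.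
nra.
Qed.

Lemma CS u v : dotv u v <= enorm u * enorm v.
Proof.
have hu := enorm_ge0 u; have hv := enorm_ge0 v.
have su := enorm_sq u; have sv := enorm_sq v.
have [u0|nu] := eqVneq (enorm u) 0.
  have : dotv u u = 0 by rewrite -su u0 expr2 mul0r.
  by move/dotv0 => ->; rewrite u0 mul0r.
have [v0|nv] := eqVneq (enorm v) 0.
  have : dotv v v = 0 by rewrite -sv v0 expr2 mul0r.
  by move/dotv0 => h; rewrite dotvC h v0 mulr0.
have H := dotv_ge0 (enorm v *: u - enorm u *: v).
rewrite dotvBl !dotvBr !dotvZl !dotvZr -su -sv (dotvC v u) in H.
have hp : 0 < enorm u * enorm v by rewrite mulr_gt0 // lt_neqAle eq_sym ?nu ?nv.
set p := enorm u * enorm v in hp.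
have : p * dotv u v <= p * p by rewrite /p; nra.
by rewrite ler_pM2l.
Qed.
Lemma enormN u : enorm (- u) = enorm u.
Proof. by rewrite -scaleN1r enormZ normrN normr1 mul1r. Qed.

Lemma enorm_le_sq u (s : R) : 0 <= s -> (enorm u <= s) = (dotv u u <= s ^+ 2).
Proof.
move=> hs; rewrite /enorm -(ler_sqrt _ (sqr_ge0 s)) sqrtr_sqr ger0_norm //.
Qed.

Lemma unit_dot u : enorm u = 1 -> dotv u u = 1.
Proof. by move=> h; rewrite -enorm_sq h expr1n. Qed.
End Basic.

Lemma sqrt_div_mul (R : realType) (X K : R) : 0 <= X -> 0 <= K ->
  Num.sqrt (X / K) * K = Num.sqrt (X * K).
Proof.
move=> hX hK; have [->|nK] := eqVneq K 0; first by rewrite !mulr0 sqrtr0.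
rewrite -{2}(ger0_norm hK) -sqrtr_sqr -sqrtrM; last by rewrite divr_ge0.
by congr Num.sqrt; rewrite expr2 mulrA divfK.
Qed.

Lemma div_mul_le (R : realType) (X K : R) : 0 <= X -> 0 <= K -> X / K * K <= X.
Proof.
move=> hX hK; have [->|nK] := eqVneq K 0; first by rewrite mulr0.
by rewrite divfK.
Qed.

Lemma ge_from_sq (R : realType) (A B : R) : 0 <= A -> B ^+ 2 <= A ^+ 2 -> B <= A.
Proof. move=> hA h; nra. Qed.

Lemma theta_ge0 (R : realType) (s t c S C : R) : 0 <= S -> 0 <= C ->
  S ^+ 2 = s ^+ 2 - t ^+ 2 -> C ^+ 2 = 1 - c ^+ 2 ->
  -1 <= c <= 1 -> - s <= t <= s -> 0 < c * s + t -> 0 <= c * S + t * C.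
Proof.
move=> hS hC eS eC /andP[c1 c2] /andP[t1 t2] h.
have [hc|hc] := leP 0 c; have [ht|ht] := leP 0 t.
- nra.
- suff : - (t * C) <= c * S by lra.
  apply: ge_from_sq; first by apply: mulr_ge0.
  have : t ^+ 2 <= (c * s) ^+ 2.
    have h1 : 0 < c * s - t by lra.
    have := mulr_gt0 h h1; nra.
  rewrite sqrrN !exprMn eS eC; nra.
- suff : - (c * S) <= t * C by lra.
  apply: ge_from_sq; first by apply: mulr_ge0.
  have : (c * s) ^+ 2 <= t ^+ 2.
    have h1 : 0 < t - c * s by nra.
    have := mulr_gt0 h h1; nra.
  rewrite sqrrN !exprMn eS eC; nra.
- nra.
Qed.

Lemma alg1 (R : realType) (s t S C : R) : S != 0 -> s ^+ 2 = S ^+ 2 + t ^+ 2 ->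
  (t * (C / S)) ^+ 2 + C ^+ 2 = (C * s / S) ^+ 2.
Proof.
move=> hS e.
have -> : (C * s / S) ^+ 2 = C ^+ 2 * s ^+ 2 / S ^+ 2 by rewrite !expr2; field.
rewrite e; field; exact: hS.
Qed.

Lemma alg2 (R : realType) (s t c S C : R) : S != 0 -> s ^+ 2 = S ^+ 2 + t ^+ 2 ->
  C * s / S * s - (c + t * (C / S)) * t = C * S - t * c.
Proof.
move=> hS e.
have -> : C * s / S * s = C * s ^+ 2 / S by rewrite expr2; field.
rewrite e; field; exact: hS.
Qed.

Section Main.
Variables (R : realType) (n m : nat) (a lam : 'cV[R]_n) (d y : 'cV[R]_m).
Hypotheses (ha : enorm a = 1) (hlam : enorm lam = 1) (hd : enorm d <= 1).

Local Notation s := (enorm y).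
Local Notation t := (dotv d y).
Local Notation c := (dotv lam a).

Lemma s_ge0 : 0 <= s. Proof. exact: enorm_ge0. Qed.

Lemma t_bnd : - s <= t <= s.
Proof.
have hs := s_ge0; have hd0 := enorm_ge0 d.
apply/andP; split.
  have := CS (- d) y; rewrite dotvNl enormN => h.
  have := ler_wpM2r hs hd; rewrite mul1r => h2; lra.
have h := CS d y.
have := ler_wpM2r hs hd; rewrite mul1r => h2; lra.
Qed.

Lemma c_bnd : -1 <= c <= 1.
Proof.
apply/andP; split.
  by have := CS (- lam) a; rewrite dotvNl enormN ha hlam mul1r; lra.
by have := CS lam a; rewrite ha hlam mul1r.
Qed.

Lemma ac : dotv a lam = c. Proof. exact: dotvC. Qed.

Lemma enorm_w (th : R) : enorm (lam - th *: a) = Num.sqrt (1 - 2 * th * c + th ^+ 2).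
Proof.
rewrite /enorm; congr Num.sqrt.
rewrite dotvBl !dotvBr !dotvZl !dotvZr (unit_dot hlam) (unit_dot ha) ac.
ring.
Qed.

Lemma weak (x : 'cV[R]_n) (th : R) : feasP a d y x -> 0 <= th ->
  dotv lam x <= objD a lam d y th.
Proof.
move=> [hx1 hx2] hth; rewrite /objD.
have h1 : dotv lam x <= dotv (lam - th *: a) x - th * t.
  rewrite dotvBl dotvZl; nra.
apply: (le_trans h1); apply: lerB => //.
apply: (le_trans (CS _ _)); apply: ler_wpM2l => //; exact: enorm_ge0.
Qed.


Lemma X_ge0 : 0 <= s ^+ 2 - t ^+ 2.
Proof. have := t_bnd; have := s_ge0; move=> h /andP[h1 h2]; nra. Qed.

Lemma K_ge0 : 0 <= 1 - c ^+ 2.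
Proof. have := c_bnd; move=> /andP[h1 h2]; nra. Qed.

Lemma xopt_feas_val : feasP a d y (xopt a lam d y) /\
  dotv lam (xopt a lam d y) = valformula a lam d y.
Proof.
rewrite /xopt /valformula; case: asboolP => hP; (split; first split).
- by rewrite enormZ hlam mulr1 ger0_norm ?s_ge0.
- by rewrite dotvZr ac; rewrite /caseP in hP; lra.
- by rewrite dotvZr (unit_dot hlam) mulr1.
all: rewrite /sP; set K := 1 - c ^+ 2; set X := s ^+ 2 - t ^+ 2.
all: set q := Num.sqrt (X / K).
all: have hX : 0 <= X := X_ge0.
all: have hK : 0 <= K := K_ge0.
all: have eq : q ^+ 2 = X / K by rewrite /q sqr_sqrtr // divr_ge0.
- rewrite enorm_le_sq ?s_ge0 //.
  rewrite dotvBl !dotvBr !dotvZl !dotvZr (unit_dot ha) (unit_dot hlam) ac.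
  have h1 := div_mul_le hX hK.
  rewrite -eq in h1.
  rewrite [X in X <= _](_ : _ = q ^+ 2 * K + t ^+ 2); last by rewrite /K; ring.
  rewrite /X in h1; lra.
- by rewrite dotvBr !dotvZr (unit_dot ha) ac; lra.
- rewrite dotvBr !dotvZr (unit_dot hlam) -(sqrt_div_mul hX hK) -/q /K; ring.
Qed.


Local Notation X := (s ^+ 2 - t ^+ 2).
Local Notation K := (1 - c ^+ 2).
Local Notation S := (Num.sqrt X).
Local Notation C := (Num.sqrt K).
Local Notation V := (valformula a lam d y).

Lemma S0_case : ~ caseP a lam d y -> S = 0 -> t = s /\ 0 < s.
Proof.
move=> hP /eqP; rewrite sqrtr_eq0 => hX.
have hX0 := X_ge0; have := t_bnd; have := c_bnd; have hs := s_ge0.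
move=> /andP[c1 c2] /andP[t1 t2].
have hP' : 0 < c * s + t by rewrite ltNge; apply/negP.
have e : (s - t) * (s + t) = 0 by lra.
move/eqP: e; rewrite mulf_eq0 => /orP[/eqP e|/eqP e].
  split; first lra.
  rewrite lt_neqAle hs andbT; apply/negP => /eqP e2.
  rewrite -e2 in hP' t1 t2; nra.
exfalso; have et : t = - s by lra.
rewrite et in hP'; nra.
Qed.

Lemma V_S0 : ~ caseP a lam d y -> S = 0 -> V = - (s * c).
Proof.
move=> hP hS; have [et hs] := S0_case hP hS.
rewrite /valformula; case: asboolP => // _.
move/eqP: hS; rewrite sqrtr_eq0 => hX.
have -> : X = 0 by have := X_ge0; lra.
by rewrite mul0r sqrtr0 et sub0r.
Qed.

Definition thstar := c + t * (C / S).

Lemma thstar_props : ~ caseP a lam d y -> S != 0 ->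
  0 <= thstar /\ objD a lam d y thstar = V.
Proof.
move=> hP hS.
have hX0 := X_ge0; have hK0 := K_ge0.
have eS : S ^+ 2 = X by rewrite sqr_sqrtr.
have eC : C ^+ 2 = K by rewrite sqr_sqrtr.
have hS0 : 0 < S by rewrite lt_neqAle eq_sym hS sqrtr_ge0.
have hC0 : 0 <= C := sqrtr_ge0 _.
have hs := s_ge0.
have hP' : 0 < c * s + t by rewrite ltNge; apply/negP.
split.
  rewrite /thstar.
  have h := theta_ge0 (sqrtr_ge0 _) hC0 eS eC c_bnd t_bnd hP'.
  have -> : c + t * (C / S) = (c * S + t * C) / S by field.
  exact: divr_ge0 (ltW hS0).
rewrite /objD enorm_w.
have e1 : 1 - 2 * thstar * c + thstar ^+ 2 = (t * (C / S)) ^+ 2 + C ^+ 2.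
  by rewrite eC /thstar; ring.
have es : s ^+ 2 = S ^+ 2 + t ^+ 2 by rewrite eS; ring.
rewrite e1 (alg1 _ hS es) sqrtr_sqr ger0_norm; last first.
  by apply: divr_ge0 (ltW hS0); apply: mulr_ge0.
rewrite /thstar (alg2 _ _ hS es) /valformula.
case: asboolP => // _.
by rewrite sqrtrM // mulrC.
Qed.

Lemma ubP (x : 'cV[R]_n) : feasP a d y x -> dotv lam x <= V.
Proof.
move=> hx.
have [hP|hP] := asboolP (caseP a lam d y).
  rewrite /valformula; case: asboolP => // _.
  case: hx => hx1 _.
  by apply: (le_trans (CS _ _)); rewrite hlam mul1r.
have [hS|hS] := eqVneq S 0; last first.
  have [h1 h2] := thstar_props hP hS.
  by rewrite -h2; apply: weak.
rewrite (V_S0 hP hS); have [et hs] := S0_case hP hS.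
case: hx => hx1 hx2.
rewrite enorm_le_sq ?s_ge0 // in hx1.
have h : dotv (x + s *: a) (x + s *: a) = 0.
  apply/eqP; rewrite eq_le dotv_ge0 andbT.
  rewrite dotvDl !dotvDr !dotvZl !dotvZr (unit_dot ha) (dotvC x a).
  rewrite et in hx2; nra.
have := dotv0 h lam; rewrite dotvDl dotvZl (dotvC a lam) (dotvC x lam).
lra.
Qed.

Lemma optP : optvalP a lam d y = V%:E.
Proof.
apply/eqP; rewrite eq_le; apply/andP; split.
  apply: ge_ereal_sup => _ [x hx <-]; rewrite lee_fin; exact: ubP.
have [h1 h2] := xopt_feas_val.
apply: ereal_sup_ubound; exists (xopt a lam d y) => //; by rewrite h2.
Qed.


Lemma dual_eq (th : R) : dualfun a lam d y th = (objD a lam d y th)%:E.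
Proof.
set w := lam - th *: a.
have hl : forall x, lagrangian a lam d y th x = dotv w x - th * t.
  by move=> x; rewrite /lagrangian /w dotvBl dotvZl; ring.
have hw := enorm_ge0 w; have hs := s_ge0.
apply/eqP; rewrite eq_le; apply/andP; split.
  apply: ge_ereal_sup => _ [x hx <-]; rewrite lee_fin hl /objD -/w.
  apply: lerB => //; apply: (le_trans (CS _ _)); exact: ler_wpM2l.
apply: ereal_sup_ubound; exists ((s / enorm w) *: w).
  rewrite /= enormZ ger0_norm ?divr_ge0 //.
  by have := div_mul_le hs hw.
rewrite hl dotvZr -enorm_sq /objD -/w; congr (_%:E); congr (_ - _).
have [->|nw] := eqVneq (enorm w) 0; first by rewrite expr2 !mulr0 mul0r.
by rewrite expr2; field.
Qed.

Lemma lbD (th : R) : 0 <= th -> V <= objD a lam d y th.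
Proof.
move=> hth; have [h1 h2] := xopt_feas_val; rewrite -h2; exact: weak.
Qed.

Lemma optD_att (th0 : R) : 0 <= th0 -> objD a lam d y th0 = V ->
  optvalD a lam d y = V%:E.
Proof.
move=> h0 e; apply/eqP; rewrite eq_le; apply/andP; split.
  apply: ge_ereal_inf; exists (V%:E) => //; exists th0 => //; by rewrite e.
apply: le_ereal_inf_tmp => _ [th hth <-]; rewrite lee_fin; exact: lbD.
Qed.

Lemma S0_bound : ~ caseP a lam d y -> S = 0 -> forall e th, 0 < e ->
  `|c| + 1 + s * K / e <= th -> objD a lam d y th <= V + e.
Proof.
move=> hP hS e th he hth.
rewrite (V_S0 hP hS); have [et hs] := S0_case hP hS.
have hK := K_ge0.
set u := th - c.
have hsK : 0 <= s * K / e by apply: divr_ge0 (ltW he); apply: mulr_ge0 (ltW hs) hK.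
have hc : c <= `|c| := ler_norm c.
have hu : 1 + s * K / e <= u by rewrite /u; lra.
have hu0 : 0 < u by lra.
have hq : Num.sqrt (1 - 2 * th * c + th ^+ 2) <= u + K / u.
  rewrite -(ger0_norm (_ : 0 <= u + K / u)); last first.
    by have := divr_ge0 hK (ltW hu0); lra.
  rewrite -sqrtr_sqr ler_sqrt ?sqr_ge0 //.
  have -> : (u + K / u) ^+ 2 = u ^+ 2 + 2 * K + (K / u) ^+ 2.
    by rewrite !expr2; field; rewrite gt_eqF.
  have -> : 1 - 2 * th * c + th ^+ 2 = u ^+ 2 + K by rewrite /u; ring.
  have := sqr_ge0 (K / u); lra.
have hKu : s * K / u <= e.
  rewrite ler_pdivrMr //.
  have : s * K / e * e = s * K by rewrite divfK ?gt_eqF.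
  nra.
rewrite /objD enorm_w et.
have := ler_wpM2r (ltW hs) hq.
have -> : (u + K / u) * s = u * s + s * K / u by rewrite mulrDl; field; rewrite gt_eqF.
rewrite /u; lra.
Qed.


Lemma optD_S0 : ~ caseP a lam d y -> S = 0 -> optvalD a lam d y = V%:E.
Proof.
move=> hP hS; apply/eqP; rewrite eq_le; apply/andP; split; last first.
  apply: le_ereal_inf_tmp => _ [th hth <-]; rewrite lee_fin; exact: lbD.
apply/lee_addgt0Pr => e he.
have [et hs] := S0_case hP hS.
have hK := K_ge0.
set th := `|c| + 1 + s * K / e.
have hth : 0 <= th.
  have : 0 <= s * K / e by apply: divr_ge0 (ltW he); apply: mulr_ge0 (ltW hs) hK.
  have := normr_ge0 c; rewrite /th; lra.
apply: ge_ereal_inf; exists (objD a lam d y th)%:E; first by exists th.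
by rewrite -EFinD lee_fin; apply: S0_bound.
Qed.

Lemma obj0 : caseP a lam d y -> objD a lam d y 0 = V.
Proof.
move=> hP; rewrite /objD scale0r subr0 hlam mul1r mul0r subr0 /valformula.
by case: asboolP.
Qed.

Lemma optD : optvalD a lam d y = V%:E.
Proof.
have [hP|hP] := asboolP (caseP a lam d y).
  exact: (optD_att (lexx 0) (obj0 hP)).
have [hS|hS] := eqVneq S 0; first exact: optD_S0.
have [h1 h2] := thstar_props hP hS; exact: optD_att h1 h2.
Qed.

Lemma lim_S0 : ~ caseP a lam d y -> S = 0 ->
  (objD a lam d y t)%:E @[t --> +oo] --> optvalD a lam d y.
Proof.
move=> hP hS; rewrite (optD_S0 hP hS).
have [et hs] := S0_case hP hS.
have hK := K_ge0.
apply: cvg_EFin; first by near=> th.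
apply/cvgrPdist_le => e he.
near=> th.
have hth : `|c| + 1 + s * K / e <= th.
  near: th; apply: nbhs_pinfty_ge; exact: num_real.
have hth0 : 0 <= th.
  have : 0 <= s * K / e by apply: divr_ge0 (ltW he); apply: mulr_ge0 (ltW hs) hK.
  have := normr_ge0 c; lra.
have h1 := lbD hth0.
have h2 := S0_bound hP hS he hth.
rewrite /= distrC ger0_norm; lra.
Unshelve. all: end_near.
Qed.

End Main.

Unset Implicit Arguments.

Theorem propositionA1 (R : realType) (n m : nat) (a lam : 'cV[R]_n)
    (d y : 'cV[R]_m)
    (ha : enorm a = 1) (hlam : enorm lam = 1) (hd : enorm d <= 1) :
  (* the optimal-value formula, valid for every unit lam (incl. lam = +-a) *)
  optvalP a lam d y = (valformula a lam d y)%:E /\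
  (lam <> a -> lam <> - a ->
    (* the Lagrangian dual function of (P) is the objective of (D) *)
    (forall theta : R, 0 <= theta ->
       dualfun a lam d y theta = (objD a lam d y theta)%:E) /\
    (* x(y) is an optimal solution of (P) *)
    (feasP a d y (xopt a lam d y) /\
     (dotv lam (xopt a lam d y))%:E = optvalP a lam d y) /\
    (* theta(y) in R_+ u {+oo} is an optimal solution of (D) *)
    ((0 <= thetaopt a lam d y)%E /\
     (forall r : R, thetaopt a lam d y = r%:E ->
        (objD a lam d y r)%:E = optvalD a lam d y) /\
     (thetaopt a lam d y = +oo%E ->
        (objD a lam d y t)%:E @[t --> +oo] --> optvalD a lam d y)) /\
    (* strong duality *)
    optvalP a lam d y = optvalD a lam d y).
Proof.
have P := optP y ha hlam hd.
have D := optD y ha hlam hd.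
have [xf xv] := xopt_feas_val y ha hlam hd.
split; first exact: P.
move=> _ _; split; first by move=> th _; exact: dual_eq.
split; first by split => //; rewrite P xv.
split; last by rewrite P D.
rewrite D; split; [|split].
- rewrite /thetaopt; case: asboolP => hP //.
  case: eqP => hS //; rewrite lee_fin.
  by have [] := thstar_props ha hlam hd hP (introN eqP hS).
- move=> r; rewrite /thetaopt; case: asboolP => hP.
    by case=> <-; rewrite (obj0 hlam hP).
  case: eqP => hS // [<-].
  by have [_ ->] := thstar_props ha hlam hd hP (introN eqP hS).
- rewrite /thetaopt; case: asboolP => hP // ; case: eqP => hS // _.
  rewrite -D; exact: (lim_S0 ha hlam hd hP hS).
Qed.
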